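(* Let $R$ be a t-unital ring and $\widetilde R=\mathbb Z\oplus R$ its unitalization. Then the full subcategory of c-unital left $R$-modules is closed under cokernels in the category of all (nonunital) left $R$-modules if and only if $R$ is a projective unital left $\widetilde R$-module.
   Context: Rings are associative, not necessarily unital; modules are not assumed unital. $\widetilde R=\mathbb Z\oplus R$ is the unital ring obtained by formally adjoining a unit, with $R$ a two-sided ideal; nonunital $R$-modules are the same as unital $\widetilde R$-modules. $R$ is t-unital if $R\otimes_R R\to R$ is an isomorphism. A left $R$-module $P$ is c-unital if $P\to\mathrm{Hom}_R(R,P)$, $p\mapsto(r\mapsto rp)$, is an isomorphism. *)

(* Defs.v *)
From HB Require Import structures.
From mathcomp Require Import all_boot all_order all_algebra.
Set Implicit Arguments. Unset Strict Implicit. Unset Printing Implicit Defensive.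
Import GRing.Theory.
Local Open Scope ring_scope.

Record nuRing := NuRing {
  nr_sort :> zmodType;
  nr_mul : nr_sort -> nr_sort -> nr_sort;
  nr_mulA : forall r s t, nr_mul (nr_mul r s) t = nr_mul r (nr_mul s t);
  nr_mulDl : forall r s t, nr_mul (r + s) t = nr_mul r t + nr_mul s t;
  nr_mulDr : forall r s t, nr_mul r (s + t) = nr_mul r s + nr_mul r t }.

Record nuLmod (R : nuRing) := NuLmod {
  lm_sort :> zmodType;
  lm_act : R -> lm_sort -> lm_sort;
  lm_actA : forall r s m, lm_act (@nr_mul R r s) m = lm_act r (lm_act s m);
  lm_actDl : forall r s m, lm_act (r + s) m = lm_act r m + lm_act s m;
  lm_actDr : forall r m n, lm_act r (m + n) = lm_act r m + lm_act r n }.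

Definition is_hom (R : nuRing) (M N : nuLmod R) (f : M -> N) : Prop :=
  (forall x y, f (x + y) = f x + f y) /\
  (forall r m, f (lm_act r m) = lm_act r (f m)).

Definition regular (R : nuRing) : nuLmod R :=
  @NuLmod R R (@nr_mul R) (@nr_mulA R) (@nr_mulDl R) (@nr_mulDr R).

(** t-unitality: the multiplication map R ⊗_R R -> R is an isomorphism,
    stated through the universal property of R ⊗_R R: the multiplication
    R x R -> R is a universal biadditive R-balanced map into abelian groups. *)
Definition t_unital (R : nuRing) : Prop :=
  forall (A : zmodType) (f : R -> R -> A),
    (forall r r' s, f (r + r') s = f r s + f r' s) ->
    (forall r s s', f r (s + s') = f r s + f r s') ->
    (forall r s t, f (@nr_mul R r s) t = f r (@nr_mul R s t)) ->
    exists g : R -> A,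
      [/\ (forall x y, g (x + y) = g x + g y),
          (forall r s, f r s = g (@nr_mul R r s)) &
          (forall g' : R -> A, (forall x y, g' (x + y) = g' x + g' y) ->
             (forall r s, f r s = g' (@nr_mul R r s)) -> forall x, g' x = g x)].

(** c-unitality: the map P -> Hom_R(R, P), p |-> (r |-> r p), is bijective. *)
Definition c_unital (R : nuRing) (P : nuLmod R) : Prop :=
  (forall p p' : P, (forall r, lm_act r p = lm_act r p') -> p = p') /\
  (forall f : R -> P, @is_hom R (regular R) P f ->
     exists p : P, forall r, f r = lm_act r p).

Definition is_cokernel (R : nuRing) (P Q C : nuLmod R) (f : P -> Q) (g : Q -> C)
  : Prop :=
  is_hom g /\ (forall p, g (f p) = 0) /\
  (forall (D : nuLmod R) (h : Q -> D), is_hom h -> (forall p, h (f p) = 0) ->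
     exists k : C -> D, [/\ is_hom k, (forall q, k (g q) = h q) &
       (forall k' : C -> D, is_hom k' -> (forall q, k' (g q) = h q) ->
          forall c, k' c = k c)]).

Definition c_unital_closed_under_cokernels (R : nuRing) : Prop :=
  forall (P Q C : nuLmod R) (f : P -> Q) (g : Q -> C),
    is_hom f -> c_unital P -> c_unital Q -> is_cokernel f g -> c_unital C.

(** The unitalization  R~ = Z ⊕ R, with elements (n, r) : int * R and
    multiplication (n, r)(m, s) = (nm, n s + m r + r s). *)
Definition rt_mul (R : nuRing) (a b : int * R) : int * R :=
  (a.1 * b.1, b.2 *~ a.1 + a.2 *~ b.1 + @nr_mul R a.2 b.2).
Definition rt_add (R : nuRing) (a b : int * R) : int * R :=
  (a.1 + b.1, a.2 + b.2).

Record rtLmod (R : nuRing) := RtLmod {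
  rt_sort :> zmodType;
  rt_act : int * R -> rt_sort -> rt_sort;
  rt_act1 : forall m, rt_act (1, 0) m = m;
  rt_actA : forall a b m, rt_act (rt_mul a b) m = rt_act a (rt_act b m);
  rt_actDl : forall a b m, rt_act (rt_add a b) m = rt_act a m + rt_act b m;
  rt_actDr : forall a m n, rt_act a (m + n) = rt_act a m + rt_act a n }.

Definition rt_lin (R : nuRing) (A B : zmodType)
  (actA : int * R -> A -> A) (actB : int * R -> B -> B) (f : A -> B) : Prop :=
  (forall x y, f (x + y) = f x + f y) /\ (forall a x, f (actA a x) = actB a (f x)).

(** The action of R~ on R (R is a two-sided ideal of R~). *)
Definition rt_actR (R : nuRing) (a : int * R) (s : R) : R :=
  s *~ a.1 + @nr_mul R a.2 s.

Definition R_projective_over_unitalization (R : nuRing) : Prop :=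
  forall (M N : rtLmod R) (g : M -> N) (h : R -> N),
    rt_lin (@rt_act R M) (@rt_act R N) g ->
    (forall n : N, exists m : M, g m = n) ->
    rt_lin (@rt_actR R) (@rt_act R N) h ->
    exists k : R -> M,
      rt_lin (@rt_actR R) (@rt_act R M) k /\ (forall s, g (k s) = h s).

(* Main.v *)
Require Import Defs.
From HB Require Import structures.
From mathcomp Require Import all_boot all_order all_algebra.
From mathcomp Require Import boolp classical_sets.
Set Implicit Arguments. Unset Strict Implicit. Unset Printing Implicit Defensive.
Import GRing.Theory.
Local Open Scope ring_scope.

Section AddF.
Variables (A B : zmodType) (f : A -> B) (H : forall x y, f (x + y) = f x + f y).
Lemma af0 : f 0 = 0.
Proof. have h := H 0 0; rewrite addr0 in h. by apply: (addrI (f 0)); rewrite addr0 -h. Qed.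
Lemma afN x : f (- x) = - f x.
Proof. by apply: (addrI (f x)); rewrite -H !subrr af0. Qed.
Lemma afB x y : f (x - y) = f x - f y.
Proof. by rewrite H afN. Qed.
Lemma afMn x n : f (x *+ n) = f x *+ n.
Proof. elim: n => [|n IH]; first by rewrite !mulr0n af0. by rewrite !mulrS H IH. Qed.
Lemma afMz x n : f (x *~ n) = f x *~ n.
Proof. case: n => n /=; first exact: afMn. by rewrite !NegzE !mulrNz afN afMn. Qed.
End AddF.

Section Basics.
Variable R : nuRing.
Local Notation "r ** s" := (@nr_mul R r s) (at level 40).

Section Mod.
Variable M : nuLmod R.
Local Notation act := (@lm_act R M).
Lemma act0r m : act 0 m = 0.
Proof. exact: (af0 (f := fun r => act r m) (fun r s => lm_actDl r s m)). Qed.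
Lemma actr0 r : act r 0 = 0.
Proof. exact: (af0 (lm_actDr r)). Qed.
Lemma actrN r m : act r (- m) = - act r m.
Proof. exact: (afN (lm_actDr r)). Qed.
Lemma actrB r m n : act r (m - n) = act r m - act r n.
Proof. exact: (afB (lm_actDr r)). Qed.
Lemma actNr r m : act (- r) m = - act r m.
Proof. exact: (afN (f := fun r => act r m) (fun r s => lm_actDl r s m)). Qed.
Lemma actBr r s m : act (r - s) m = act r m - act s m.
Proof. exact: (afB (f := fun r => act r m) (fun r s => lm_actDl r s m)). Qed.
Lemma actrMz r m n : act r (m *~ n) = act r m *~ n.
Proof. exact: (afMz (lm_actDr r)). Qed.
Lemma actMzr r m n : act (r *~ n) m = act r m *~ n.
Proof. exact: (afMz (f := fun r => act r m) (fun r s => lm_actDl r s m)). Qed.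

Definition nu_rtact (a : int * R) (m : M) : M := m *~ a.1 + act a.2 m.

Lemma nu_rt1 m : nu_rtact (1, 0) m = m.
Proof. by rewrite /nu_rtact /= act0r addr0 mulr1z. Qed.
Lemma nu_rtA a b m : nu_rtact (rt_mul a b) m = nu_rtact a (nu_rtact b m).
Proof.
case: a b => [a1 a2] [b1 b2]; rewrite /nu_rtact /rt_mul /=.
rewrite !lm_actDl lm_actA !actMzr lm_actDr actrMz mulrzDl mulrC mulrzA.
rewrite -!addrA; congr (_ + _); rewrite [RHS]addrC -!addrA; congr (_ + _).
Qed.
Lemma nu_rtDl a b m : nu_rtact (rt_add a b) m = nu_rtact a m + nu_rtact b m.
Proof.
case: a b => [a1 a2] [b1 b2]; rewrite /nu_rtact /rt_add /= lm_actDl mulrzDr.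
by rewrite -!addrA; congr (_ + _); rewrite addrCA.
Qed.
Lemma nu_rtDr a m n : nu_rtact a (m + n) = nu_rtact a m + nu_rtact a n.
Proof.
rewrite /nu_rtact lm_actDr mulrzDl.
by rewrite -!addrA; congr (_ + _); rewrite addrCA.
Qed.
Definition rtof : rtLmod R := RtLmod nu_rt1 nu_rtA nu_rtDl nu_rtDr.
End Mod.
End Basics.

Section RtNu.
Variable R : nuRing.
Variable M : rtLmod R.
Local Notation ract := (@rt_act R M).
Definition nuact (r : R) (m : M) : M := ract (0, r) m.
Lemma nuactA r s m : nuact (@nr_mul R r s) m = nuact r (nuact s m).
Proof.
rewrite /nuact -rt_actA /rt_mul /=; congr (ract _ m).
by rewrite mulr0 !mulr0z !add0r.
Qed.
Lemma nuactDl r s m : nuact (r + s) m = nuact r m + nuact s m.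
Proof. by rewrite /nuact -rt_actDl /rt_add /= addr0. Qed.
Lemma nuactDr r m n : nuact r (m + n) = nuact r m + nuact r n.
Proof. exact: rt_actDr. Qed.
Definition nuof : nuLmod R := NuLmod nuactA nuactDl nuactDr.

Lemma ract_int n m : ract (n, 0) m = m *~ n.
Proof.
have H : forall a b, ract (a + b, 0) m = ract (a, 0) m + ract (b, 0) m.
  by move=> a b; rewrite -rt_actDl /rt_add /= addr0.
have H1 := af0 (f := fun a => ract (a, 0) m) H.
case: n => n /=.
  elim: n => [|n IH]; first by rewrite mulr0z.
  by rewrite -[n.+1]addn1 PoszD H IH rt_act1 mulrzDr mulr1z.
rewrite NegzE. rewrite (afN (f := fun a => ract (a, 0) m)) // mulrNz; congr (- _).
elim: n => [|n IH]; first by rewrite mulr1z rt_act1.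
by rewrite -[n.+2]addn1 PoszD H IH rt_act1 mulrzDr mulr1z.
Qed.
Lemma ract_split n r m : ract (n, r) m = m *~ n + nuact r m.
Proof.
by rewrite -ract_int /nuact -rt_actDl /rt_add /= addr0 add0r.
Qed.
End RtNu.

Section Lin.
Variable R : nuRing.

Lemma hom_rtlin (M N : nuLmod R) (f : M -> N) :
  is_hom f -> rt_lin (@nu_rtact R M) (@nu_rtact R N) f.
Proof.
case=> fD fA; split => // [[n r]] x; rewrite /nu_rtact /= fD fA.
by rewrite (afMz fD).
Qed.
Lemma rtlin_hom (M N : nuLmod R) (f : M -> N) :
  rt_lin (@nu_rtact R M) (@nu_rtact R N) f -> is_hom f.
Proof.
case=> fD fA; split => // r m; have := fA (0, r) m.
by rewrite /nu_rtact /= !mulr0z !add0r.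
Qed.
Lemma rtlin_hom' (M N : rtLmod R) (f : M -> N) :
  rt_lin (@rt_act R M) (@rt_act R N) f -> @is_hom R (nuof M) (nuof N) f.
Proof. by case=> fD fA; split => // r m; exact: fA. Qed.
Lemma hom_rtlin' (M : nuLmod R) (N : rtLmod R) (f : M -> N) :
  @is_hom R M (nuof N) f -> rt_lin (@nu_rtact R M) (@rt_act R N) f.
Proof.
case=> fD fA; split => // [[n r]] x; rewrite /nu_rtact /= fD ract_split.
by rewrite (afMz fD) fA.
Qed.
End Lin.

Section Quot.
Variable R : nuRing.
Variable M : nuLmod R.
Local Notation act := (@lm_act R M).
Variable S : M -> Prop.
Hypothesis S0 : S 0.
Hypothesis SB : forall x y, S x -> S y -> S (x - y).
Hypothesis Sact : forall r x, S x -> S (act r x).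

Lemma SN x : S x -> S (- x).
Proof. by move=> Sx; rewrite -sub0r; apply: SB. Qed.
Lemma SD x y : S x -> S y -> S (x + y).
Proof. by move=> Sx Sy; rewrite -[y]opprK; apply: SB => //; apply: SN. Qed.

Lemma subrB2 (a b c : M) : (a - c) - (b - c) = a - b.
Proof. by rewrite opprB addrA subrK. Qed.
Lemma subrB3 (a b c : M) : (c - a) - (c - b) = b - a.
Proof. by rewrite opprB addrC addrA subrK. Qed.
Definition canon (x : M) : M := xget 0 (fun y => S (y - x)).
Lemma canonP x : S (canon x - x).
Proof. by apply: (xgetPex 0 (P := fun y => S (y - x))); exists x; rewrite subrr. Qed.
Lemma canon_eq x y : S (x - y) -> canon x = canon y.
Proof.
move=> Sxy; rewrite /canon; congr (xget 0 _); apply: funext => z.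
apply: propext; split => Sz.
  by have := SD Sz Sxy; rewrite addrA subrK.
by have := SB Sz Sxy; rewrite subrB2.
Qed.
Lemma canon_eqP x y : canon x = canon y -> S (x - y).
Proof.
move=> e; have := SB (canonP y) (canonP x); by rewrite e subrB3.
Qed.
Lemma canonK x : canon (canon x) = canon x.
Proof. exact/canon_eq/canonP. Qed.

Definition Qt := {x : M | canon x == x}.
Definition mk (x : M) : Qt := exist _ (canon x) (introT eqP (canonK x)).
Lemma mk_val (q : Qt) : mk (val q) = q.
Proof. by apply: val_inj => /=; apply/eqP/(valP q). Qed.
Lemma mk_eq x y : S (x - y) -> mk x = mk y.
Proof. by move=> Sxy; apply: val_inj => /=; apply: canon_eq. Qed.
Lemma mk_eqP x y : mk x = mk y -> S (x - y).
Proof. by move=> e; apply: canon_eqP; have := congr1 val e. Qed.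
Lemma val_mk x : S (val (mk x) - x).
Proof. exact: canonP. Qed.

Definition qzero := mk 0.
Definition qadd (a b : Qt) := mk (val a + val b).
Definition qopp (a : Qt) := mk (- val a).
Lemma qaddmk x y : qadd (mk x) (mk y) = mk (x + y).
Proof.
apply: mk_eq; rewrite opprD addrACA; apply: SD; exact: val_mk.
Qed.
Lemma qoppmk x : qopp (mk x) = mk (- x).
Proof. by apply: mk_eq; rewrite -opprD; apply/SN/val_mk. Qed.
Lemma qaddA : associative qadd.
Proof.
move=> a b c; rewrite -[a]mk_val -[b]mk_val -[c]mk_val.
by rewrite !qaddmk addrA.
Qed.
Lemma qaddC : commutative qadd.
Proof. by move=> a b; rewrite -[a]mk_val -[b]mk_val !qaddmk addrC. Qed.
Lemma qadd0 : left_id qzero qadd.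
Proof. by move=> a; rewrite -[a]mk_val /qzero qaddmk add0r. Qed.
Lemma qaddN : left_inverse qzero qopp qadd.
Proof. by move=> a; rewrite -[a]mk_val qoppmk qaddmk addNr. Qed.
HB.instance Definition _ := Choice.copy Qt {x : M | canon x == x}.
HB.instance Definition _ := GRing.isZmodule.Build Qt qaddA qaddC qadd0 qaddN.

Definition qact (r : R) (a : Qt) : Qt := mk (act r (val a)).
Lemma qactmk r x : qact r (mk x) = mk (act r x).
Proof. by apply: mk_eq; rewrite -actrB; apply/Sact/val_mk. Qed.
Lemma qactA r s a : qact (@nr_mul R r s) a = qact r (qact s a).
Proof. by rewrite -[a]mk_val !qactmk lm_actA. Qed.
Lemma qactDl r s a : qact (r + s) a = qact r a + qact s a.
Proof. by rewrite -[a]mk_val !qactmk lm_actDl -qaddmk. Qed.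
Lemma qactDr r a b : qact r (a + b) = qact r a + qact r b.
Proof.
rewrite -[a]mk_val -[b]mk_val.
have -> : mk (val a) + mk (val b) = mk (val a + val b) by rewrite -qaddmk.
by rewrite !qactmk lm_actDr -qaddmk.
Qed.
Definition Qmod : nuLmod R := NuLmod qactA qactDl qactDr.

Lemma mk_hom : @is_hom R M Qmod mk.
Proof. split; first by move=> x y; rewrite -qaddmk. by move=> r x; rewrite /= qactmk. Qed.
Lemma mk0P x : (mk x = 0 :> Qmod) -> S x.
Proof. by move=> e; have := mk_eqP e; rewrite subr0. Qed.
Lemma mk_surj (q : Qmod) : exists x, mk x = q.
Proof. by exists (val q); apply: mk_val. Qed.

Lemma mk_univ (D : nuLmod R) (h : M -> D) : is_hom h -> (forall x, S x -> h x = 0) ->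
  exists k : Qmod -> D, [/\ is_hom k, (forall q, k (mk q) = h q) &
       (forall k' : Qmod -> D, is_hom k' -> (forall q, k' (mk q) = h q) ->
          forall c, k' c = k c)].
Proof.
move=> [hD hA] hS.
have hm x : h (val (mk x)) = h x.
  by apply/eqP; rewrite -subr_eq0 -(afB hD); apply/eqP/hS/val_mk.
exists (fun q => h (val q)); split => //.
- split => [a b|r a] /=; first by rewrite hm hD.
  by rewrite hm hA.
- by move=> k' _ Hk' c; rewrite -[c]mk_val Hk' hm.
Qed.

Definition St := {x : M | `[< S x >]}.
Lemma S_in x : S x -> `[< S x >].
Proof. by move=> Sx; apply/asboolP. Qed.
Definition szero : St := exist _ 0 (S_in S0).
Definition sadd (a b : St) : St :=
  exist _ (val a + val b) (S_in (SD (asboolW (valP a)) (asboolW (valP b)))).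
Definition sopp (a : St) : St := exist _ (- val a) (S_in (SN (asboolW (valP a)))).
Lemma saddA : associative sadd.
Proof. by move=> a b c; apply: val_inj => /=; rewrite addrA. Qed.
Lemma saddC : commutative sadd.
Proof. by move=> a b; apply: val_inj => /=; rewrite addrC. Qed.
Lemma sadd0 : left_id szero sadd.
Proof. by move=> a; apply: val_inj => /=; rewrite add0r. Qed.
Lemma saddN : left_inverse szero sopp sadd.
Proof. by move=> a; apply: val_inj => /=; rewrite addNr. Qed.
HB.instance Definition _ := Choice.copy St {x : M | `[< S x >]}.
HB.instance Definition _ := GRing.isZmodule.Build St saddA saddC sadd0 saddN.
Definition sact (r : R) (a : St) : St :=
  exist _ (act r (val a)) (S_in (Sact r (asboolW (valP a)))).
Lemma sactA r s a : sact (@nr_mul R r s) a = sact r (sact s a).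
Proof. by apply: val_inj => /=; rewrite lm_actA. Qed.
Lemma sactDl r s a : sact (r + s) a = sact r a + sact s a.
Proof. by apply: val_inj => /=; rewrite lm_actDl. Qed.
Lemma sactDr r a b : sact r (a + b) = sact r a + sact r b.
Proof. by apply: val_inj => /=; rewrite lm_actDr. Qed.
Definition Smod : nuLmod R := NuLmod sactA sactDl sactDr.
Lemma val_add (a b : Smod) : val (a + b) = val a + val b. Proof. by []. Qed.
Lemma val_act r (a : Smod) : val (lm_act r a) = act r (val a). Proof. by []. Qed.
End Quot.

Section HomMod.
Variable R : nuRing.
Local Notation "r ** s" := (@nr_mul R r s) (at level 40).
Variable M : nuLmod R.
Local Notation act := (@lm_act R M).
Definition ishom (f : R -> M) := @is_hom R (regular R) M f.
Definition Ht := {f : R -> M | `[< ishom f >]}.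
HB.instance Definition _ := Choice.copy Ht {f : R -> M | `[< ishom f >]}.
Lemma hP (a : Ht) : ishom (val a). Proof. exact: asboolW (valP a). Qed.
Lemma hD (a : Ht) x y : val a (x + y) = val a x + val a y. Proof. exact: (hP a).1. Qed.
Lemma hA (a : Ht) r s : val a (r ** s) = act r (val a s). Proof. exact: (hP a).2. Qed.
Lemma hext (a b : Ht) : (forall x, val a x = val b x) -> a = b.
Proof. by move=> e; apply: val_inj; apply: funext. Qed.

Lemma ishom0 : ishom (fun _ => 0).
Proof. by split => *; rewrite ?addr0 ?actr0. Qed.
Lemma ishomD (a b : Ht) : ishom (fun x => val a x + val b x).
Proof.
split => [x y|r s] /=; first by rewrite !hD addrACA.
by rewrite !hA lm_actDr.
Qed.
Lemma ishomN (a : Ht) : ishom (fun x => - val a x).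
Proof. split => [x y|r s] /=; first by rewrite hD opprD. by rewrite hA actrN. Qed.
Definition mkH (f : R -> M) (H : ishom f) : Ht :=
  @exist _ (fun f => `[< ishom f >]) f (introT (asboolP _) H).
Definition hzero : Ht := mkH ishom0.
Definition hadd (a b : Ht) : Ht := mkH (ishomD a b).
Definition hopp (a : Ht) : Ht := mkH (ishomN a).
Lemma haddA : associative hadd.
Proof. by move=> a b c; apply: hext => x /=; rewrite addrA. Qed.
Lemma haddC : commutative hadd.
Proof. by move=> a b; apply: hext => x /=; rewrite addrC. Qed.
Lemma hadd0 : left_id hzero hadd.
Proof. by move=> a; apply: hext => x /=; rewrite add0r. Qed.
Lemma haddN : left_inverse hzero hopp hadd.
Proof. by move=> a; apply: hext => x /=; rewrite addNr. Qed.
HB.instance Definition _ := GRing.isZmodule.Build Ht haddA haddC hadd0 haddN.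

Lemma ishomR (a : Ht) r : ishom (fun s => val a (s ** r)).
Proof.
split => [x y|u s] /=; first by rewrite nr_mulDl hD.
by rewrite nr_mulA hA.
Qed.
Definition hact (r : R) (a : Ht) : Ht := mkH (ishomR a r).
Lemma hactA r s a : hact (r ** s) a = hact r (hact s a).
Proof. by apply: hext => x /=; rewrite nr_mulA. Qed.
Lemma hactDl r s a : hact (r + s) a = hact r a + hact s a.
Proof. by apply: hext => x /=; rewrite nr_mulDr hD. Qed.
Lemma hactDr r a b : hact r (a + b) = hact r a + hact r b.
Proof. by apply: hext => x. Qed.
Definition Hmod : nuLmod R := NuLmod hactA hactDl hactDr.

Lemma Hmod_cunital : t_unital R -> c_unital Hmod.
Proof.
move=> tu; split.
  move=> a b e; apply: hext => x.
  have fD1 r r' s : val a ((r + r') ** s) = val a (r ** s) + val a (r' ** s).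
    by rewrite nr_mulDl hD.
  have fD2 r s s' : val a (r ** (s + s')) = val a (r ** s) + val a (r ** s').
    by rewrite nr_mulDr hD.
  have fA r s t : val a ((r ** s) ** t) = val a (r ** (s ** t)).
    by rewrite nr_mulA.
  have [g [_ _ gU]] := tu _ _ fD1 fD2 fA.
  rewrite (gU (val a)) //; last exact: hD.
  rewrite (gU (val b)) //; first exact: hD.
  by move=> r s; have := congr1 (fun c : Hmod => val c r) (e s).
move=> Psi [PD PA].
pose f t r := val (Psi r) t.
have fD1 r r' s : f (r + r') s = f r s + f r' s by rewrite /f hD.
have fD2 r s s' : f r (s + s') = f r s + f r s' by rewrite /f PD.
have fA r s t : f (r ** s) t = f r (s ** t).
  by rewrite /f [Psi (s ** t)]PA.
have [g [gD gf gU]] := tu _ _ fD1 fD2 fA.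
have gH : ishom g.
  split => // u x.
  pose f' t r := act u (f t r).
  have f'D1 r r' s : f' (r + r') s = f' r s + f' r' s by rewrite /f' fD1 lm_actDr.
  have f'D2 r s s' : f' r (s + s') = f' r s + f' r s' by rewrite /f' fD2 lm_actDr.
  have f'A r s t : f' (r ** s) t = f' r (s ** t) by rewrite /f' fA.
  have [g' [_ _ g'U]] := tu _ _ f'D1 f'D2 f'A.
  rewrite (g'U (fun x => g (u ** x))) //=; first last.
  - by move=> r s; rewrite -nr_mulA -gf /f' /f hA.
  - by move=> y z; rewrite nr_mulDr gD.
  rewrite (g'U (fun x => act u (g x))) //=.
  - by move=> y z; rewrite gD lm_actDr.
  - by move=> r s; rewrite -gf.
exists (mkH gH) => r.
by apply: hext => t /=; rewrite -gf.
Qed.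
End HomMod.

Section Main.
Variable R : nuRing.
Local Notation "r ** s" := (@nr_mul R r s) (at level 40).

Lemma img_closed (P Q : nuLmod R) (f : P -> Q) : is_hom f ->
  [/\ (exists p, f p = 0), (forall x y, (exists p, f p = x) -> (exists p, f p = y) ->
        exists p, f p = x - y) &
      (forall r x, (exists p, f p = x) -> exists p, f p = lm_act r x)].
Proof.
case=> fD fA; split.
- by exists 0; exact: af0 fD.
- by move=> x y [p <-] [p' <-]; exists (p - p'); rewrite (afB fD).
- by move=> r x [p <-]; exists (lm_act r p); rewrite fA.
Qed.

Lemma proj_to_closed : R_projective_over_unitalization R -> c_unital_closed_under_cokernels R.
Proof.
move=> proj P Q C f g Hf cP cQ [Hg [gf univ]].
have [S10 S1B S1A] := img_closed Hf.
have [S20 S2B S2A] := img_closed Hg.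
pose S1 q := exists p, f p = q.
pose S2 c := exists q, g q = c.
have kerg q : g q = 0 -> exists p, f p = q.
  move=> gq0.
  have [k [[kD kA] kg _]] := univ _ _ (mk_hom (S := S1) S10 S1B S1A)
     (fun p => mk_eq (S := S1) S10 S1B (ex_intro _ p (esym (subr0 (f p))))).
  apply: (@mk0P _ _ S1 S10 S1B S1A); rewrite -kg gq0; exact: af0 kD.
have gsurj c : exists q, g q = c.
  have h0 : @is_hom R Q (Qmod (S := S2) S20 S2B S2A) (fun _ => 0).
    by split => *; rewrite ?addr0 ?actr0.
  have [k [_ _ kU]] := univ _ _ h0 (fun _ => erefl).
  have e1 := kU _ (mk_hom (S := S2) S20 S2B S2A)
     (fun q => mk_eq (S := S2) S20 S2B (ex_intro _ q (esym (subr0 (g q))))).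
  have h0' : @is_hom R C (Qmod (S := S2) S20 S2B S2A) (fun _ => 0).
    by split => *; rewrite ?addr0 ?actr0.
  have e2 := kU (fun _ => 0) h0' (fun _ => erefl).
  apply: (@mk0P _ _ S2 S20 S2B S2A); by rewrite e1 -(e2 c).
case: Hg => gD gA.
split.
- move=> c c' e; have [q gq] := gsurj (c - c').
  have Hr r : exists p, f p = lm_act r q.
    by apply: kerg; rewrite gA gq actrB e subrr.
  pose Im := Smod (S := S1) S10 S1B S1A.
  pose pr (p : P) : Im := exist _ (f p) (@S_in _ _ S1 _ (ex_intro _ p erefl)).
  pose h (r : R) : Im := exist _ (lm_act r q) (@S_in _ _ S1 _ (Hr r)).
  have prH : is_hom pr.
    case: Hf => fD fA; split => [x y|r x]; apply: val_inj => /=; by rewrite ?fD ?fA.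
  have prS : forall n : rtof Im, exists m : rtof P, pr m = n.
    move=> n; have [p fp] := asboolW (valP n).
    by exists p; apply: val_inj => /=.
  have hH : @is_hom R (regular R) Im h.
    split => [x y|r x]; apply: val_inj => /=; by rewrite ?lm_actDl ?lm_actA.
  have [k [kL kpr]] := proj (rtof P) (rtof Im) pr h (hom_rtlin prH) prS (hom_rtlin hH).
  have [p kp] := cP.2 k (@rtlin_hom R (regular R) P k kL).
  have fpq : f p = q.
    apply: cQ.1 => r; have := congr1 val (kpr r); rewrite /= kp.
    by case: Hf => _ ->.
  by apply/eqP; rewrite -subr_eq0 -gq -fpq gf.
- move=> phi phiH.
  have gS : forall n : rtof C, exists m : rtof Q, g m = n by [].
  have [k [kL kg]] := proj (rtof Q) (rtof C) g phi (hom_rtlin (conj gD gA)) gS (hom_rtlin phiH).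
  have [q kq] := cQ.2 k (@rtlin_hom R (regular R) Q k kL).
  by exists (g q) => r; rewrite -kg kq gA.
Qed.

Lemma closed_to_proj : t_unital R -> c_unital_closed_under_cokernels R ->
  R_projective_over_unitalization R.
Proof.
move=> tu cl M N g h [gD gA] gS [hhD hhA].
pose M' := nuof M. pose N' := nuof N.
have gH : @is_hom R M' N' g by split => // r m; exact: gA.
have gsH (a : Hmod M') : @ishom R N' (fun x : R => (g (val a x) : N')).
  split => [x y|r s]; [move: (hD a x y) | move: (hA a r s)] => /= ->; first exact: gD.
  exact: gA.
pose gs (a : Hmod M') : Hmod N' := mkH (gsH a).
have gsHom : is_hom gs.
  by split => [a b|r a]; apply: hext => x /=; rewrite ?gD.
have [S0 SB SA] := img_closed gsHom.
pose S y := exists x, gs x = y.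
pose Cq := Qmod (S := S) S0 SB SA.
pose pi : Hmod N' -> Cq := mk (S := S) S0 SB.
have coker : is_cokernel gs pi.
  split; first exact: mk_hom.
  split; first by move=> p; apply: (mk_eq (S := S)); exists p; rewrite subr0.
  move=> D h0 h0H h0f; apply: mk_univ => // x [p <-]; exact: h0f.
have cC := cl _ _ _ gs _ gsHom (Hmod_cunital M' tu) (Hmod_cunital N' tu) coker.
have hH : @ishom R N' h.
  split => // r s; have := hhA (0, r) s; rewrite /rt_actR /= mulr0z add0r; exact.
pose hN : Hmod N' := mkH hH.
have e : pi hN = pi 0.
  apply: cC.1 => r /=; rewrite /pi !qactmk; try exact: SA; refine (@mk_eq _ _ S S0 SB _ _ _).
  have [m gm] := gS (h r).
  have psiH : @ishom R M' (fun s => @lm_act R M' s m).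
    by split => [x y|u x]; rewrite ?lm_actDl ?lm_actA.
  exists (mkH psiH); apply: hext => s /=.
  rewrite subr0.
  by have := hhA (0, s) r; rewrite /rt_actR /= mulr0z add0r => ->; rewrite -gm; apply: gA.
have [phi ephi] := @mk_eqP _ _ S S0 SB _ _ e.
exists (val phi); split.
  exact (@hom_rtlin' R (regular R) M (val phi) (hP phi)).
by move=> s; have := congr1 (fun a : Hmod N' => val a s) ephi; rewrite /= subr0.
Qed.
End Main.

Theorem corollary7p6 (R : nuRing) :
  t_unital R ->
  (c_unital_closed_under_cokernels R <-> R_projective_over_unitalization R).
Proof.
move=> tu; split; first exact: closed_to_proj.
exact: proj_to_closed.
Qed.
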